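(* Let $\mathcal A\subset\mathbb R^n$ be compact with diameter $D_{\mathcal A}<\infty$ and $\mathcal X=\mathrm{conv}(\mathcal A)$ be $\alpha$-strongly convex for some $\alpha>0$. Let $f$ be convex and differentiable with $L$-Lipschitz gradient. Run the AC-FW algorithm with the closed-loop Frank-Wolfe subroutine and a damping sequence satisfying Condition (D), let $\eta\in(1,2)$, and let $\{h_t\}_{t\ge0}$ be the elements of $\mathcal G\cap\mathcal I_\eta$ in increasing order. Then for every $t\ge0$, $$f(x_{h_{t+1}})-f(x^\star)\le\max\left\{\frac{\eta}{2},\ 1-\left(1-\frac{\eta}{2}\right)\frac{\alpha\|\nabla f(x_{h_t})\|_2}{8L}\right\}\bigl(f(x_{h_t})-f(x^\star)\bigr).$$ If in addition $f$ is $\mu$-strongly convex for some $\mu>0$, then for every $t\ge0$, $$f(x_{h_{t+1}})-f(x^\star)\le\max\left\{\frac{\eta}{2},\ 1-\left(1-\frac{\eta}{2}\right)\frac{\alpha\sqrt{\mu\,(f(x_{h_t})-f(x^\star))}}{8\sqrt2\,L}\right\}\bigl(f(x_{h_t})-f(x^\star)\bigr).$$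
   Context: $D_{\mathcal A}:=\sup_{x,y\in\mathcal A}\|x-y\|_2$; $\|\nabla f(x)-\nabla f(y)\|_2\le L\|x-y\|_2$ for all $x,y\in\mathbb R^n$. $x^\star$ is an optimal solution of $\min_{x\in\mathcal X}f(x)$. $\mathcal X$ is $\alpha$-strongly convex if for all $\rho\in[0,1]$, $x,y\in\mathcal X$ and $z\in\mathbb R^n$ with $\|z\|_2\le1$: $\rho x+(1-\rho)y+\frac{\rho(1-\rho)\alpha\|x-y\|_2^2}{2}z\in\mathcal X$. $f$ is $\mu$-strongly convex if $f(y)\ge f(x)+\nabla f(x)^\top(y-x)+\frac\mu2\|y-x\|_2^2$ for all $x,y$. For $x\ne y$, $\ell(x,y):=2|f(y)-f(x)-\nabla f(x)^\top(y-x)|/\|y-x\|_2^2$, $\ell(x,x):=0$. AC-FW algorithm with closed-loop Frank-Wolfe subroutine: given $\{r_t\}_{t\ge0}$, pick $x_{-1}\in\mathcal A$, $x_0\in\arg\min_{v\in\mathcal A}\nabla f(x_{-1})^\top v$, $L_0:=\ell(x_{-1},x_0)$. For $t=0,1,\dots$: $v_t\in\arg\min_{v\in\mathcal A}\nabla f(x_t)^\top v$; $d_t:=x_t-v_t$, $\gamma_t^{\max}:=1$; $\gamma_t:=\min\{\nabla f(x_t)^\top d_t/(L_t\|d_t\|_2^2),\gamma_t^{\max}\}$; $\bar x_{t+1}:=x_t-\gamma_td_t$; $L_{t+1}:=\max\{\ell(x_t,\bar x_{t+1}),r_tL_t\}$; $x_{t+1}:=\bar x_{t+1}$ if $f(\bar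 x_{t+1})<f(x_t)$, else $x_{t+1}:=x_t$. $\mathcal I_\eta:=\{t\ge0:L_{t+1}\le\eta L_t\}$; $\mathcal G:=\{t\ge0:\gamma_t^{\max}\ge1\text{ or }\gamma_t<\gamma_t^{\max}\}$ (here $\mathcal G$ is all of $\mathbb Z_+$). Condition (D): $r_t\in(0,1]$ for all $t$ and $\prod_{t\ge0}r_t\in(0,1]$. *)

(* Defs.v *)
From HB Require Import structures.
From mathcomp Require Import all_boot all_order all_algebra.
From mathcomp Require Import all_classical all_reals all_analysis.
Set Implicit Arguments. Unset Strict Implicit. Unset Printing Implicit Defensive.
Import Order.TTheory GRing.Theory Num.Theory.
Import numFieldNormedType.Exports.
Local Open Scope classical_set_scope.
Local Open Scope ring_scope.

Section Defs.
Variables (R : realType) (n : nat).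
Local Notation vec := 'rV[R]_n.

Definition dot (u w : vec) : R := \sum_(i < n) u ord0 i * w ord0 i.
Definition norm2 (u : vec) : R := Num.sqrt (dot u u).

Definition conv_hull (A : set vec) : set vec :=
  [set y | exists (k : nat) (w : 'I_k -> R) (p : 'I_k -> vec),
     (forall i, 0 <= w i) /\ \sum_(i < k) w i = 1 /\ (forall i, A (p i)) /\
     y = \sum_(i < k) w i *: p i].

Definition strongly_convex_set (alpha : R) (X : set vec) : Prop :=
  forall (rho : R) (x y z : vec), 0 <= rho <= 1 -> X x -> X y -> norm2 z <= 1 ->
    X (rho *: x + (1 - rho) *: y
       + (rho * (1 - rho) * alpha * (norm2 (x - y)) ^+ 2 / 2) *: z).

Definition convex_fun (f : vec -> R) : Prop :=
  forall (t : R) (x y : vec), 0 <= t <= 1 ->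
    f (t *: x + (1 - t) *: y) <= t * f x + (1 - t) * f y.

Definition is_gradient (f : vec -> R) (grad : vec -> vec) : Prop :=
  forall x : vec, differentiable f x /\ forall h : vec, 'd f x h = dot (grad x) h.

Definition lipschitz_grad (grad : vec -> vec) (L : R) : Prop :=
  forall x y : vec, norm2 (grad x - grad y) <= L * norm2 (x - y).

Definition strongly_convex_fun (mu : R) (f : vec -> R) (grad : vec -> vec) : Prop :=
  forall x y : vec, f y >= f x + dot (grad x) (y - x) + mu / 2 * (norm2 (y - x)) ^+ 2.

Definition is_minimizer (f : vec -> R) (X : set vec) (xs : vec) : Prop :=
  X xs /\ forall x, X x -> f xs <= f x.

Definition ell (f : vec -> R) (grad : vec -> vec) (x y : vec) : R :=
  if x == y then 0
  else 2 * `|f y - f x - dot (grad x) (y - x)| / (norm2 (y - x)) ^+ 2.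

Definition lmo (A : set vec) (g v : vec) : Prop :=
  A v /\ forall u, A u -> dot g v <= dot g u.

Definition condition_D (r : nat -> R) : Prop :=
  (forall t, 0 < r t <= 1) /\
  exists p : R, 0 < p <= 1 /\ (fun N : nat => \prod_(i < N) r i) @ \oo --> p.

Definition gamma_max : R := 1.

(* step size gamma_t = min{ grad^T d / (L ||d||^2), gamma_max }, with the
   convention that the ratio is +infinity (so gamma_t = gamma_max) when
   L_t ||d_t||^2 = 0 *)
Definition step (grad : vec -> vec) (xt vt : vec) (Lt : R) : R :=
  let d := xt - vt in
  if Lt * (norm2 d) ^+ 2 == 0 then gamma_max
  else Num.min (dot (grad xt) d / (Lt * (norm2 d) ^+ 2)) gamma_max.

Definition xbar (grad : vec -> vec) (xt vt : vec) (Lt : R) : vec :=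
  xt - step grad xt vt Lt *: (xt - vt).

(* one full run of AC-FW with the closed-loop FW subroutine:
   xm1 = x_{-1}, x t = x_t, v t = v_t, Ls t = L_t *)
Definition ACFW_run (f : vec -> R) (grad : vec -> vec) (A : set vec)
    (r : nat -> R) (xm1 : vec) (x v : nat -> vec) (Ls : nat -> R) : Prop :=
  A xm1 /\ lmo A (grad xm1) (x 0%N) /\ Ls 0%N = ell f grad xm1 (x 0%N) /\
  forall t : nat,
    lmo A (grad (x t)) (v t) /\
    Ls t.+1 = Num.max (ell f grad (x t) (xbar grad (x t) (v t) (Ls t))) (r t * Ls t) /\
    x t.+1 = (if f (xbar grad (x t) (v t) (Ls t)) < f (x t)
              then xbar grad (x t) (v t) (Ls t) else x t).

Definition I_eta (eta : R) (Ls : nat -> R) (t : nat) : Prop := Ls t.+1 <= eta * Ls t.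
Definition G_set (grad : vec -> vec) (x v : nat -> vec) (Ls : nat -> R) (t : nat) : Prop :=
  1 <= gamma_max \/ step grad (x t) (v t) (Ls t) < gamma_max.

Definition enumerates (S : nat -> Prop) (h : nat -> nat) : Prop :=
  (forall t, (h t < h t.+1)%N) /\ (forall k, S k <-> exists t, h t = k).

End Defs.

(* Main.v *)
Require Import Defs.
From HB Require Import structures.
From mathcomp Require Import all_boot all_order all_algebra.
From mathcomp Require Import all_classical all_reals all_analysis.
From mathcomp Require Import ring lra.
Import Order.TTheory GRing.Theory Num.Theory.
Import numFieldNormedType.Exports.
Local Open Scope classical_set_scope.
Local Open Scope ring_scope.
Section DotL.
Context {R : realType} {n : nat}.
Local Notation vec := 'rV[R]_n.
Implicit Types u w z : vec.

Lemma dotC u w : dot u w = dot w u.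
Proof. by apply: eq_bigr => i _; rewrite mulrC. Qed.
Lemma dotDr u w z : dot u (w + z) = dot u w + dot u z.
Proof. by rewrite /dot -big_split; apply: eq_bigr => i _; rewrite mxE mulrDr. Qed.
Lemma dotDl u w z : dot (w + z) u = dot w u + dot z u.
Proof. by rewrite dotC dotDr !(dotC u). Qed.
Lemma dotZr c u w : dot u (c *: w) = c * dot u w.
Proof. by rewrite /dot mulr_sumr; apply: eq_bigr => i _; rewrite mxE mulrCA. Qed.
Lemma dotZl c u w : dot (c *: w) u = c * dot w u.
Proof. by rewrite dotC dotZr dotC. Qed.
Lemma dotNr u w : dot u (- w) = - dot u w.
Proof. by rewrite -scaleN1r dotZr mulN1r. Qed.
Lemma dotNl u w : dot (- w) u = - dot w u.
Proof. by rewrite dotC dotNr dotC. Qed.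
Lemma dotBr u w z : dot u (w - z) = dot u w - dot u z.
Proof. by rewrite dotDr dotNr. Qed.
Lemma dotBl u w z : dot (w - z) u = dot w u - dot z u.
Proof. by rewrite dotDl dotNl. Qed.
Lemma dot0r u : dot u 0 = 0.
Proof. by rewrite /dot big1 // => i _; rewrite mxE mulr0. Qed.
Lemma dot_ge0 u : 0 <= dot u u.
Proof. by apply: sumr_ge0 => i _; rewrite -expr2 sqr_ge0. Qed.
Lemma dot_eq0 u : dot u u = 0 -> u = 0.
Proof.
move=> /eqP; rewrite psumr_eq0 => [/allP H|i _]; last by rewrite -expr2 sqr_ge0.
apply/rowP => i; rewrite mxE.
have := H i (mem_index_enum _); rewrite /= mulf_eq0 orbb => /eqP //.
Qed.
Lemma norm2_ge0 u : 0 <= norm2 u.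
Proof. exact: sqrtr_ge0. Qed.
Lemma norm2_sq u : norm2 u ^+ 2 = dot u u.
Proof. by rewrite /norm2 sqr_sqrtr // dot_ge0. Qed.
Lemma norm2_0 : norm2 (0 : vec) = 0.
Proof. by rewrite /norm2 dot0r sqrtr0. Qed.
Lemma norm2Z c u : norm2 (c *: u) = `|c| * norm2 u.
Proof.
by rewrite /norm2 dotZl dotZr mulrA -expr2 sqrtrM ?sqr_ge0 // sqrtr_sqr.
Qed.
Lemma dot_sum g k (w : 'I_k -> R) (p : 'I_k -> vec) :
  dot g (\sum_(i < k) w i *: p i) = \sum_(i < k) w i * dot g (p i).
Proof.
elim/big_rec2: _ => [|i y1 y2 _ IH]; first by rewrite dot0r.
by rewrite dotDr dotZr IH.
Qed.
End DotL.
Lemma onestep (R : realType) (h0 G K N gam Fd gn al L eta : R) :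
 0 <= h0 -> h0 <= G -> 0 <= K -> K <= 2*L -> 0 < L -> 0 <= N -> 0 < al -> 0 <= gn ->
 1 < eta < 2 ->
 gam = (if K * N == 0 then 1 else Num.min (G / (K*N)) 1) ->
 Fd <= - gam * G + gam^+2 * eta * K * N / 2 ->
 al/4 * gn * N <= G ->
 h0 + Fd <= Num.max (eta/2) (1 - (1 - eta/2) * (al * gn) / (8*L)) * h0.
Proof.
move=> h0p h0G Kp K2L Lp Np alp gnp /andP[e1 e2] -> HF HG.
have le1 : eta / 2 * h0 <= Num.max (eta/2) (1 - (1 - eta/2) * (al * gn) / (8*L)) * h0.
  by apply: ler_wpM2r => //; rewrite le_max lexx.
have le2 : (1 - (1 - eta/2) * (al * gn) / (8*L)) * h0 <= Num.max (eta/2) (1 - (1 - eta/2) * (al * gn) / (8*L)) * h0.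
  by apply: ler_wpM2r => //; rewrite le_max lexx orbT.
case: eqP HF => [KN0|KN0] HF.
  apply: le_trans le1; have E0 : eta * K * N = 0 by rewrite -mulrA KN0 mulr0.
  rewrite expr1n mul1r E0 mul0r addr0 mulN1r in HF. nra.
have Kpos : 0 < K by rewrite lt0r Kp andbT; apply/eqP => K0; apply: KN0; rewrite K0 mul0r.
have Npos : 0 < N by rewrite lt0r Np andbT; apply/eqP => N0; apply: KN0; rewrite N0 mulr0.
have KNp : 0 < K * N by rewrite mulr_gt0.
set q := G / (K * N).
have qKN : q * (K * N) = G by rewrite /q mulfVK //; apply/eqP.
case: (leP q 1) => hq.
- rewrite (@min_l _ _ q 1 hq) in HF.
  apply: le_trans le2.
  have qlb : al * gn / (8 * L) <= q.
    have -> : al * gn / (8 * L) = (al/4 * gn * N) / (K * N) * (K / (2 * L)).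
      field. by rewrite !gt_eqF.
    have kk : K / (2 * L) <= 1 by rewrite ler_pdivrMr ?mul1r //; lra.
    have q0 : 0 <= q by rewrite /q divr_ge0 // ?(le_trans h0p h0G) // ltW.
    have : al / 4 * gn * N / (K * N) <= q by rewrite /q ler_wpM2r // invr_ge0 ltW.
    move=> H1.
    have a0 : 0 <= al / 4 * gn * N / (K * N).
      apply: divr_ge0; [|exact: ltW].
      apply: mulr_ge0 => //; apply: mulr_ge0 => //; lra.
    apply: le_trans H1.
    by rewrite -[X in _ <= X]mulr1; apply: ler_wpM2l.
  have -> : (1 - eta / 2) * (al * gn) / (8 * L) = (1 - eta / 2) * (al * gn / (8 * L)) by rewrite !mulrA.
  have HF2 : Fd <= - (1 - eta/2) * q * G.
    apply: (le_trans HF). rewrite -qKN. nra.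
  set c := al * gn / (8 * L).
  have c0 : 0 <= c by apply: divr_ge0; [apply: mulr_ge0 => //; exact: ltW | lra].
  have cq : c * h0 <= q * G by apply: ler_pM.
  have e0 : 0 < 1 - eta / 2 by lra.
  have : (1 - eta/2) * (c * h0) <= (1 - eta/2) * (q * G) by apply: ler_wpM2l => //; exact: ltW.
  nra.
- rewrite (@min_r _ _ q 1 (ltW hq)) in HF.
  apply: le_trans le1.
  have : K * N <= G by rewrite -qKN ler_peMl // ltW.
  nra.
Qed.

Lemma first_order (R : realType) (n : nat) (f : 'rV[R]_n -> R) grad :
  convex_fun f -> is_gradient f grad ->
  forall x y, f x + dot (grad x) (y - x) <= f y.
Proof.
move=> cf gf x y.
set v := y - x.
have hd : derivable f x v := diff_derivable (proj1 (gf x)).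
have D : 'D_v f x = dot (grad x) v by rewrite deriveE ?(proj2 (gf x)) //; exact: (proj1 (gf x)).
rewrite -D -lerBrDl.
rewrite leNgt; apply/negP => Hc.
have := cvgr_gt _ hd _ Hc.
move=> Hq.
have : \forall h \near 0^'+, (0 < h) /\ (h <= 1) /\
   (f y - f x < h^-1 *: ((f \o shift x) (h *: v) - f x)).
  near=> h; split; first by near: h; exact: nbhs_right_gt.
  split; first by near: h; exact: (nbhs_right_le (@ltr01 R)).
  near: h. have {}Hq := Hq ltac:(typeclasses eauto). move: Hq. rewrite /= !near_withinE. apply: filterS => h H hp.
  apply: H. by rewrite gt_eqF.
move=> /filter_ex [h [hp [h1 Hlt]]].
move: Hlt; apply/negP; rewrite -leNgt /= /GRing.scale /=.
rewrite ler_pdivrMl //.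
have := cf (1 - h) x y.
have -> : (1 - h) *: x + (1 - (1 - h)) *: y = h *: v + x.
  have -> : 1 - (1 - h) = h by lra.
  by rewrite /v scalerBl scale1r scalerBr addrC addrA addrAC.
move=> /(_ _) H.
have /H : 0 <= 1 - h <= 1 by apply/andP; split; [rewrite subr_ge0 | rewrite lerBlDr lerDl ltW].
move=> H2. rewrite lerBlDr. apply: (le_trans H2). rewrite subKr. lra.
Unshelve. all: by end_near.
Qed.
Lemma dot_lip (R : realType) (n : nat) (a b : 'rV[R]_n) (L : R) :
  0 < L -> norm2 a <= L * norm2 b -> dot a b <= L * norm2 b ^+ 2.
Proof.
move=> Lp la.
have na := norm2_ge0 a; have nb := norm2_ge0 b.
have la2 : norm2 a ^+ 2 <= L ^+ 2 * norm2 b ^+ 2 by rewrite -exprMn; nra.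
have E := dot_ge0 (a - L *: b).
rewrite dotBl !dotBr !dotZl !dotZr (dotC b a) -!norm2_sq in E.
nra.
Qed.

Lemma xbar_conv (R : realType) (n : nat) (x v : 'rV[R]_n) (g : R) :
  x - g *: (x - v) = (1 - g) *: x + (1 - (1 - g)) *: v.
Proof.
have -> : 1 - (1 - g) = g by ring.
by rewrite scalerBl scale1r scalerBr opprB addrA [RHS]addrAC.
Qed.

Theorem lemma10 (R : realType) (n : nat) (A : set 'rV[R]_n) (alpha L : R)
    (f : 'rV[R]_n -> R) (grad : 'rV[R]_n -> 'rV[R]_n) (xs : 'rV[R]_n)
    (r : nat -> R) (xm1 : 'rV[R]_n) (x v : nat -> 'rV[R]_n) (Ls : nat -> R)
    (eta : R) (h : nat -> nat) :
  compact A ->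
  0 < alpha -> strongly_convex_set alpha (conv_hull A) ->
  convex_fun f -> is_gradient f grad -> 0 < L -> lipschitz_grad grad L ->
  is_minimizer f (conv_hull A) xs ->
  condition_D r ->
  ACFW_run f grad A r xm1 x v Ls ->
  1 < eta < 2 ->
  enumerates (fun t => G_set grad x v Ls t /\ I_eta eta Ls t) h ->
  (forall t : nat,
     f (x (h t.+1)) - f xs <=
     Num.max (eta / 2)
       (1 - (1 - eta / 2) * (alpha * norm2 (grad (x (h t)))) / (8 * L))
     * (f (x (h t)) - f xs)) /\
  (forall mu : R, 0 < mu -> strongly_convex_fun mu f grad ->
   forall t : nat,
     f (x (h t.+1)) - f xs <=
     Num.max (eta / 2)
       (1 - (1 - eta / 2) * (alpha * Num.sqrt (mu * (f (x (h t)) - f xs)))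
            / (8 * Num.sqrt 2 * L))
     * (f (x (h t)) - f xs)).
Proof.
move=> _ alp scX cf gf Lp lipg [Xxs minxs] [rpos _] [Axm1 [lmo0 [L0 Hrun]]].
move=> /andP[e1 e2] [hinc hS].
have AX : forall a, A a -> conv_hull A a.
  move=> a Aa; exists 1%N, (fun _ => 1), (fun _ => a); split; first by move=> _; exact: ler01.
  split; first by rewrite big_ord1.
  by split => //; rewrite big_ord1 scale1r.
have Xconv : forall rho y z, 0 <= rho <= 1 -> conv_hull A y -> conv_hull A z ->
    conv_hull A (rho *: y + (1 - rho) *: z).
  move=> rho y z hr Xy Xz; have := scX rho y z 0 hr Xy Xz.
  by rewrite norm2_0 scaler0 addr0; apply; exact: ler01.
have lmoX : forall g w u, lmo A g w -> conv_hull A u -> dot g w <= dot g u.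
  move=> g w u [Aw Hw] [k [wt [p [w0 [w1 [Ap ->]]]]]].
  rewrite dot_sum.
  have -> : dot g w = \sum_(i < k) wt i * dot g w by rewrite -mulr_suml w1 mul1r.
  by apply: ler_sum => i _; apply: ler_wpM2l => //; exact: Hw.
have fo := @first_order _ _ f grad cf gf.
have ell_ge0 : forall y z, 0 <= ell f grad y z.
  move=> y z; rewrite /ell; case: eqP => // _.
  by apply: divr_ge0; [apply: mulr_ge0 => // | exact: sqr_ge0].
have ell_le : forall y z, ell f grad y z <= 2 * L.
  move=> y z; rewrite /ell; case: eqP => [_|/eqP yz]; first by lra.
  have N0 : 0 < norm2 (z - y) ^+ 2.
    rewrite norm2_sq lt0r dot_ge0 andbT; apply/eqP => /dot_eq0/eqP.
    by rewrite subr_eq0 eq_sym (negbTE yz).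
  rewrite ler_pdivrMr //.
  have h1 := fo y z; have h2 := fo z y.
  have key : dot (grad z - grad y) (z - y) <= L * norm2 (z - y) ^+ 2.
    by apply: dot_lip => //; exact: lipg.
  rewrite ger0_norm; last by lra.
  have : dot (grad z) (y - z) = - dot (grad z) (z - y) by rewrite -dotNr opprB.
  rewrite dotBl in key; lra.
have descent : forall y z, f z <= f y + dot (grad y) (z - y)
    + ell f grad y z / 2 * norm2 (z - y) ^+ 2.
  move=> y z; rewrite /ell; case: eqP => [->|/eqP yz].
    by rewrite subrr dot0r norm2_0 !mul0r !addr0.
  have N0 : norm2 (z - y) ^+ 2 != 0.
    rewrite norm2_sq; apply/eqP => /dot_eq0/eqP.
    by rewrite subr_eq0 eq_sym (negbTE yz).
  have -> : 2 * `|f z - f y - dot (grad y) (z - y)| / norm2 (z - y) ^+ 2 / 2 *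
     norm2 (z - y) ^+ 2 = `|f z - f y - dot (grad y) (z - y)|.
    by field; apply: contraNneq N0 => ->; rewrite expr0n.
  have := ler_norm (f z - f y - dot (grad y) (z - y)); lra.
have inv : forall t, conv_hull A (x t) /\ 0 <= Ls t <= 2 * L.
  elim => [|t [Xt /andP[K0 K2]]].
    by split; [apply: AX; exact: lmo0.1 | rewrite L0 ell_ge0 ell_le].
  have [lmot [Lt1 xt1]] := Hrun t.
  have G0 : 0 <= dot (grad (x t)) (x t - v t).
    by rewrite dotBr subr_ge0; apply: lmoX.
  have [rp r1] := andP (rpos t).
  split.
    rewrite xt1; case: ifP => _ //; rewrite /xbar xbar_conv; apply: Xconv => //; last first.
      exact: AX lmot.1.
    rewrite /step /gamma_max; case: eqP => _; first by rewrite subrr lexx ler01.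
    apply/andP; split; rewrite ?lerBlDr ?lerDl ?subr_ge0 ?ge_min ?lexx ?orbT //.
    rewrite le_min ler01 andbT; apply: divr_ge0 => //; apply: mulr_ge0 => //; exact: sqr_ge0.
  rewrite Lt1 le_max ell_ge0 /= ge_max ell_le /=.
  by apply: le_trans K2; apply: ler_piMl.
have mono1 : forall t, f (x t.+1) <= f (x t).
  move=> t; have [_ [_ ->]] := Hrun t; case: ifP => [/ltW //|_]; exact: lexx.
have monoN : forall k m, (k <= m)%N -> f (x m) <= f (x k).
  move=> k; elim => [|m IH]; first by rewrite leqn0 => /eqP ->.
  rewrite leq_eqVlt ltnS => /orP[/eqP -> //|/IH]; apply: le_trans; exact: mono1.
have one : forall k, I_eta eta Ls k -> f (x k.+1) - f xs <=
    Num.max (eta / 2) (1 - (1 - eta / 2) * (alpha * norm2 (grad (x k))) / (8 * L))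
     * (f (x k) - f xs).
  move=> k Ik.
  have [Xk /andP[K0 K2]] := inv k.
  have [lmok [Lk1 xk1]] := Hrun k.
  set g := grad (x k); set d := x k - v k; set G := dot g d; set K := Ls k.
  set N := norm2 d ^+ 2; set gam := step grad (x k) (v k) K.
  have h0p : 0 <= f (x k) - f xs by rewrite subr_ge0; apply: minxs.
  have h0G : f (x k) - f xs <= G.
    have := fo (x k) xs; have := lmoX g (v k) xs lmok Xxs.
    rewrite /G /d !dotBr; lra.
  have N0 : 0 <= N by exact: sqr_ge0.
  have gamE : gam = (if K * N == 0 then 1 else Num.min (G / (K*N)) 1) by [].
  have HF : f (x k.+1) - f (x k) <= - gam * G + gam^+2 * eta * K * N / 2.
    have Fx : f (x k.+1) <= f (xbar grad (x k) (v k) K).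
      rewrite xk1; case: ifP => [_|/negbT]; first exact: lexx.
      by rewrite -leNgt.
    have := descent (x k) (xbar grad (x k) (v k) K).
    have -> : xbar grad (x k) (v k) K - x k = - (gam *: d).
      by rewrite /xbar addrAC subrr add0r.
    rewrite dotNr dotZr norm2_sq dotNl dotNr opprK dotZl dotZr -norm2_sq -/N [gam * (gam * N)]mulrA -expr2 -/g -/G.
    have E1 : ell f grad (x k) (xbar grad (x k) (v k) K) <= eta * K.
      apply: le_trans Ik; rewrite /K Lk1 le_max lexx //.
    have E2 : ell f grad (x k) (xbar grad (x k) (v k) K) / 2 * (gam ^+ 2 * N)
       <= eta * K / 2 * (gam ^+ 2 * N).
      apply: ler_wpM2r; first by apply: mulr_ge0 => //; exact: sqr_ge0.
      by apply: ler_wpM2r => //; lra.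
    have -> : gam ^+ 2 * eta * K * N / 2 = eta * K / 2 * (gam ^+ 2 * N) by ring.
    lra.
  have HG : alpha / 4 * norm2 g * N <= G.
    have [gn0|gnp] := eqVneq (norm2 g) 0.
      by rewrite gn0 mulr0 mul0r; lra.
    have gpos : 0 < norm2 g by rewrite lt0r gnp norm2_ge0.
    set z := - (norm2 g)^-1 *: g.
    have nz : norm2 z <= 1.
      by rewrite /z norm2Z normrN ger0_norm ?invr_ge0 ?norm2_ge0 // mulVf.
    have hr : (0 <= (1/2 : R)) && ((1/2 : R) <= 1) by apply/andP; split; lra.
    have := lmoX g (v k) _ lmok (scX (1/2) (x k) (v k) z hr Xk (AX _ lmok.1) nz).
    rewrite !dotDr !dotZr -norm2_sq -/d -/N mulNr.
    have -> : (norm2 g)^-1 * norm2 g ^+ 2 = norm2 g by rewrite expr2 mulKf.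
    rewrite /G /d dotBr -/d.
    lra.
  have := @onestep _ _ _ _ _ _ _ _ _ _ _ h0p h0G K0 K2 Lp N0 alp (norm2_ge0 g) (introT andP (conj e1 e2)) gamE HF HG.
  by have -> : f (x k) - f xs + (f (x k.+1) - f (x k)) = f (x k.+1) - f xs by ring.
have part1 : forall t : nat,
     f (x (h t.+1)) - f xs <=
     Num.max (eta / 2)
       (1 - (1 - eta / 2) * (alpha * norm2 (grad (x (h t)))) / (8 * L))
     * (f (x (h t)) - f xs).
  move=> t.
  have [_ It] : G_set grad x v Ls (h t) /\ I_eta eta Ls (h t) by apply/hS; exists t.
  apply: le_trans (one _ It).
  by rewrite lerD2r; apply: monoN; exact: hinc.
split => // mu mup scf t.
apply: (le_trans (part1 t)).
have h0p : 0 <= f (x (h t)) - f xs by rewrite subr_ge0; apply: minxs; exact: (inv _).1.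
apply: ler_wpM2r => //.
set gn := norm2 (grad (x (h t))).
set h0 := f (x (h t)) - f xs.
have gn0 : 0 <= gn := norm2_ge0 _.
have muh : mu * h0 <= gn ^+ 2 / 2.
  have := scf (x (h t)) xs.
  set u := xs - x (h t).
  have E := dot_ge0 (mu *: u + grad (x (h t))).
  rewrite !dotDl !dotDr !dotZl !dotZr (dotC u) -!norm2_sq -/gn in E.
  move=> H.
  have nu := norm2_ge0 u.
  have H2 := ler_wpM2l (ltW mup) H.
  rewrite !mulrDr in H2.
  have e3 : mu * (mu / 2 * norm2 u ^+ 2) = mu * (mu * norm2 u ^+ 2) / 2 by ring.
  rewrite e3 in H2; rewrite /h0 mulrBr; move: E H2.
  move: (mu * dot (grad (x (h t))) u) (mu * (mu * norm2 u ^+ 2)) => A2 A3.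
  move: (mu * f (x (h t))) (mu * f xs) => A1 A4 Ea Eb.
  have Ea' : 0 <= A3 + A2 + (A2 + gn ^+ 2) := Ea.
  have Eb' : A1 + A2 + A3 / 2 <= A4 := Eb.
  clear -Ea' Eb'; clearbody gn.
  lra.
have s2p : 0 < Num.sqrt (2 : R) by rewrite sqrtr_gt0; lra.
have sq : Num.sqrt (mu * h0) <= Num.sqrt 2 * gn.
  rewrite -[gn]ger0_norm // -sqrtr_sqr -sqrtrM; last by lra.
  rewrite ler_sqrt; last by apply: mulr_ge0; [lra | exact: sqr_ge0].
  have := sqr_ge0 gn; lra.
rewrite ge_max le_max lexx /= le_max; apply/orP; right.
rewrite lerD2l lerN2.
have -> : (1 - eta / 2) * (alpha * Num.sqrt (mu * h0)) / (8 * Num.sqrt 2 * L)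
   = (1 - eta / 2) * alpha / (8 * L) * (Num.sqrt (mu * h0) / Num.sqrt 2).
  by field; rewrite !gt_eqF.
have -> : (1 - eta / 2) * (alpha * gn) / (8 * L) = (1 - eta / 2) * alpha / (8 * L) * gn.
  by rewrite !mulrA mulrAC.
apply: ler_wpM2l.
  apply: divr_ge0; [apply: mulr_ge0; lra | lra].
by rewrite ler_pdivrMr // [gn * _]mulrC.
Qed.
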